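(* Let $\mathcal T\in\Sigma^n$ be a text. Then \[\mathtt{st\text{-}pos}^-\subseteq\Big\{\,j\;:\;\text{either } j=1 \text{ or, for the minimum value } i'<j \text{ such that } \mathcal T[i',j-1] \text{ occurs in } \mathcal T[1,j-2],\ \mathcal T[i',j]\text{ does not occur in }\mathcal T[1,j-1]\Big\}.\]
   Context: A text is a string $\mathcal T\in\Sigma^n$ over an integer alphabet whose last symbol $\mathcal T[n]=\$$ occurs only there and is smallest. For $i\ne j$, $\mathrm{rlce}(i,j)$ is the length of the longest common prefix of $\mathcal T[i,n]$ and $\mathcal T[j,n]$. $\mathrm{LPF}[i]=0$ if $i=1$, else $\mathrm{LPF}[i]=\max_{j<i}\mathrm{rlce}(j,i)$ (the longest previous factor array). $\mathtt{st\text{-}pos}^-$ is the set $\{i+\mathrm{LPF}[i]: i\in[n]\}$ (sorted colexicographically by the prefixes $\mathcal T[1,j]$). *)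

(* Defs.v *)
(* Strings are seq nat (integer alphabet), positions 1-indexed. *)
From mathcomp Require Import all_boot.
Set Implicit Arguments. Unset Strict Implicit. Unset Printing Implicit Defensive.

Definition sym (T : seq nat) (i : nat) : nat := nth 0 T i.-1.

(* A text: nonempty, last symbol ($) occurs only at position n and is the
   smallest symbol, i.e. every other symbol is strictly larger. *)
Definition is_text (T : seq nat) : Prop :=
  0 < size T /\ forall k, 1 <= k < size T -> sym T (size T) < sym T k.

(* T[a,b] (1-indexed, inclusive); empty if b < a *)
Definition substr (T : seq nat) (a b : nat) : seq nat :=
  take (b.+1 - a) (drop a.-1 T).

Definition occurs (s t : seq nat) : bool := infix s t.

Fixpoint lcp (s t : seq nat) : nat :=
  match s, t with
  | x :: s', y :: t' => if x == y then (lcp s' t').+1 else 0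
  | _, _ => 0
  end.

Definition rlce (T : seq nat) (i j : nat) : nat := lcp (drop i.-1 T) (drop j.-1 T).

Definition LPF (T : seq nat) (i : nat) : nat :=
  if i == 1 then 0 else \max_(1 <= j < i) rlce T j i.

Definition st_pos_minus (T : seq nat) (j : nat) : Prop :=
  exists2 i, 1 <= i <= size T & j = i + LPF T i.

Definition min_prev_occ (T : seq nat) (j i' : nat) : Prop :=
  [/\ 1 <= i' < j,
      occurs (substr T i' j.-1) (substr T 1 (j - 2)) &
      forall k, 1 <= k < i' -> ~~ occurs (substr T k j.-1) (substr T 1 (j - 2))].

(* Main.v *)
Require Import Defs.
From mathcomp Require Import all_boot.
From mathcomp Require Import zify.

Lemma lcp_cat (w s t : seq nat) : size w <= lcp (w ++ s) (w ++ t).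
Proof. by elim: w => //= x w IH; rewrite eqxx. Qed.

Lemma lcp_le_size (s t : seq nat) : lcp s t <= size t.
Proof.
elim: s t => [|x s IH] [|y t] //=; case: ifP => // _; exact: IH.
Qed.

Lemma lcp_take (s t : seq nat) : take (lcp s t) s = take (lcp s t) t.
Proof.
elim: s t => [|x s IH] [|y t] //=; case: eqP => //= ->; by rewrite IH.
Qed.

Lemma bigmax_wit (r : seq nat) (F : nat -> nat) :
  0 < \max_(x <- r) F x -> exists2 x, x \in r & \max_(x <- r) F x = F x.
Proof.
elim: r => [|a r IH]; first by rewrite big_nil.
rewrite big_cons => H.
case: (leqP (\max_(x <- r) F x) (F a)) => Hle.
  by exists a; [rewrite inE eqxx | lia].
have [x xr Hx] : exists2 x, x \in r & \max_(x <- r) F x = F x.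
  by apply: IH; apply: leq_ltn_trans Hle.
exists x; first by rewrite inE xr orbT.
rewrite -Hx; lia.
Qed.

Lemma dollar (T : seq nat) p q : is_text T -> p < q -> q < size T ->
  lcp (drop p T) (drop q T) < size T - q.
Proof.
move=> [_ Ht] pq qN; rewrite ltnNge; apply/negP => H.
have Hl : lcp (drop p T) (drop q T) = size T - q.
  by apply/eqP; rewrite eqn_leq H andbT -size_drop lcp_le_size.
have := lcp_take (drop p T) (drop q T); rewrite Hl => E.
have := congr1 (fun s => nth 0 s (size T - q).-1) E.
rewrite /= !nth_take; last by rewrite prednK // subn_gt0.
  2: by rewrite prednK // subn_gt0.
rewrite !nth_drop => E2.
have Eq : q + (size T - q).-1 = (size T).-1 by lia.
rewrite Eq in E2.
have := Ht (p + (size T - q).-1).+1.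
rewrite /sym /= -E2 ltnn.
have H1 : 1 <= (p + (size T - q).-1).+1 < size T by lia.
by move=> /(_ H1).
Qed.

Theorem corollary47 (T : seq nat) :
  is_text T ->
  forall j, st_pos_minus T j ->
    j = 1 \/
    (forall i', min_prev_occ T j i' ->
       ~~ occurs (substr T i' j) (substr T 1 j.-1)).
Proof.
move=> HT j [i /andP[i1 iN] ->].
case: (eqVneq i 1) => [->|ni1]; first by left; rewrite /LPF eqxx.
right.
rewrite /LPF (negbTE ni1).
have [q Eq] : exists q, i = q.+1 by exists i.-1; lia.
subst i.
have q1 : 1 <= q by lia.
set u := drop q T.
set M := \max_(1 <= p < q.+1) rlce T p q.+1.
have HM : M < size u.
  rewrite /M /u size_drop.
  apply: (@leq_ltn_trans (size T - q).-1); last by lia.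
  apply/bigmax_leqP_seq => p; rewrite mem_iota => Hp _.
  rewrite /rlce /=; have := @dollar T p.-1 q HT; lia.
move=> i' [/andP[i'1 i'j] Hocc Hmin].
have i'i : i' <= q.+1.
  rewrite leqNgt; apply/negP => Hlt.
  have H1 : 1 <= q.+1 < i' by lia.
  move: (Hmin q.+1 H1) => /negP; apply.
  rewrite /substr /occurs drop0.
  have -> : (q.+1 + M).-1.+1 - q.+1 = M by lia.
  case: (posnP M) => [->|Mpos]; first by rewrite take0 infix0s.
  have [p pr Hp] := @bigmax_wit (index_iota 1 q.+1) (fun p => rlce T p q.+1) Mpos.
  move: pr; rewrite mem_iota => /andP[p1 pq].
  have Hp' : M = lcp (drop p.-1 T) u by rewrite /M Hp.
  rewrite [X in take X u]Hp' -lcp_take -Hp'.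
  apply: (@infix_trans _ (take (p.-1 + M) T)).
    by rewrite takeD; apply: suffix_infix.
  have -> : (q.+1 + M - 2).+1 - 1 = q + M - 1 by lia.
  have -> : take (q + M - 1) T =
      take (p.-1 + M) T ++ drop (p.-1 + M) (take (q + M - 1) T).
    by rewrite -{1}(cat_take_drop (p.-1 + M) (take (q + M - 1) T)) take_takel //; lia.
  exact: prefix_infix.
apply/negP => Hc.
have Hc2 : infix (take M.+1 u) (take (q + M) T).
  move: Hc; rewrite /occurs /substr drop0.
  have -> : (q.+1 + M).-1.+1 - 1 = q + M by lia.
  apply: infix_trans.
  set s := take _ (drop i'.-1 T).
  have -> : take M.+1 u = drop (q - i'.-1) s.
    rewrite /s /u.
    have -> : (q.+1 + M).+1 - i' = M.+1 + (q - i'.-1) by lia.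
    rewrite -take_drop drop_drop.
    have -> : q - i'.-1 + i'.-1 = q by lia.
    by [].
  by rewrite -[X in infix _ X](cat_take_drop (q - i'.-1) s); apply: suffix_infix.
move/infixP: Hc2 => [a [b Hab]].
have Hsz : size (take M.+1 u) = M.+1 by rewrite size_takel.
have Hszab := congr1 size Hab.
rewrite !size_cat Hsz size_take in Hszab.
have Hp0 : size a < q by move: Hszab; case: ifP; lia.
have Hdrop : drop (size a) T = take M.+1 u ++ (b ++ drop (q + M) T).
  by rewrite -{1}(cat_take_drop (q + M) T) Hab -!catA drop_size_cat.
have Hlcp : M.+1 <= lcp (drop (size a) T) u.
  rewrite Hdrop -{2}(cat_take_drop M.+1 u).
  by have := lcp_cat (take M.+1 u) (b ++ drop (q + M) T) (drop M.+1 u); rewrite Hsz.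
have : lcp (drop (size a) T) u <= M.
  rewrite /M (_ : lcp (drop (size a) T) u = rlce T (size a).+1 q.+1) //.
  apply: (leq_bigmax_seq (size a).+1) => //; rewrite mem_iota; lia.
lia.
Qed.
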